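(* $\mathfrak{b}\leq\mathfrak{a}(conv)$.
   Context: $conv$ is the ideal on $\mathbb{Q}\cap[0,1]$ generated by (the ranges of) sequences in $\mathbb{Q}\cap[0,1]$ which converge in $[0,1]$, i.e. $A\in conv$ iff $A$ is covered by finitely many convergent sequences (together with a finite set). For an ideal $\mathcal{J}$ on a countable set, $\mathfrak{a}(\mathcal{J})$ is the smallest size of an uncountable family $\mathcal{A}$ of $\mathcal{J}$-positive sets (sets not in $\mathcal{J}$) which is maximal with respect to the property that $A\cap B\in\mathcal{J}$ for all distinct $A,B\in\mathcal{A}$. $\mathfrak{b}$ is the bounding number. *)

(* Defs.v *)
From HB Require Import structures.
From mathcomp Require Import all_boot all_order all_algebra.
From mathcomp Require Import all_classical all_reals all_analysis.
From mathcomp Require Import Rstruct Rstruct_topology.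
Set Implicit Arguments. Unset Strict Implicit. Unset Printing Implicit Defensive.
Import Order.TTheory GRing.Theory Num.Theory.
Local Open Scope classical_set_scope.
Local Open Scope ring_scope.

Definition QI : set rat := [set q | (0 <= q) && (q <= 1)].

(* A sequence in Q ∩ [0,1] which converges (in the reals) to a point;
   the limit lies in [0,1] automatically since [0,1] is closed, but we
   require it explicitly. *)
Definition conv_seq (s : nat -> rat) : Prop :=
  (forall n, QI (s n)) /\
  exists x : Rdefinitions.R, 0 <= x <= 1 /\ ((fun n => (ratr (s n) : Rdefinitions.R)) @ \oo --> x).

Definition conv (A : set rat) : Prop :=
  A `<=` QI /\
  exists (F : set rat) (ss : seq (nat -> rat)),
    finite_set F /\ (forall s, s \in ss -> conv_seq s) /\
    A `<=` F `|` [set q | exists2 s, s \in ss & exists n, s n = q].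

Definition conv_pos (A : set rat) : Prop := A `<=` QI /\ ~ conv A.

Definition conv_MAD (Af : set (set rat)) : Prop :=
  (forall A, Af A -> conv_pos A) /\
  (forall A B, Af A -> Af B -> A <> B -> conv (A `&` B)) /\
  (forall B, conv_pos B -> ~ Af B -> exists2 A, Af A & ~ conv (A `&` B)).

Definition unbounded (F : set (nat -> nat)) : Prop :=
  ~ exists g : nat -> nat, forall f, F f -> exists N, forall n, (N <= n)%N -> (f n <= g n)%N.

(* Main.v *)
Require Import Defs.
From HB Require Import structures.
From mathcomp Require Import all_boot all_order all_algebra.
From mathcomp Require Import all_classical all_reals all_analysis.
From mathcomp Require Import Rstruct Rstruct_topology.
From mathcomp Require Import lra.
Set Implicit Arguments. Unset Strict Implicit. Unset Printing Implicit Defensive.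
Import Order.TTheory GRing.Theory Num.Theory numFieldNormedType.Exports.
Local Open Scope classical_set_scope.
Local Open Scope ring_scope.
Notation R := Rdefinitions.R.

Definition rR (q : rat) : R := ratr q.
Definition acc (X : set rat) (y : R) := limit_point (rR @` X) y.

Lemma ballR (x e t : R) : ball x e t = (`|x - t| < e).
Proof. by []. Qed.

Lemma accP X y : acc X y -> forall e : R, 0 < e ->
  exists a, [/\ X a, rR a != y & `|y - rR a| < e].
Proof.
move=> H e e0; have [t [ty [a Xa at_] bt]] := H _ (nbhsx_ballx y e e0).
by exists a; rewrite at_ -ballR; split.
Qed.

Lemma accI X y : (forall e : R, 0 < e ->
  exists a, [/\ X a, rR a != y & `|y - rR a| < e]) -> acc X y.
Proof.
move=> H U /nbhs_ballP [e /= e0 sub].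
have [a [Xa ay ya]] := H e e0.
exists (rR a); split => //; first by exists a.
by apply: sub; rewrite /= ballR.
Qed.

Lemma acc_mono X Y y : X `<=` Y -> acc X y -> acc Y y.
Proof.
move=> XY H; apply: accI => e e0; have [a [Xa ? ?]] := accP H e0.
by exists a; split => //; apply: XY.
Qed.

Lemma acc_seq X y : acc X y -> exists p : nat -> rat,
  [/\ forall n, X (p n), forall n, rR (p n) != y &
      (fun n => rR (p n)) @ \oo --> y].
Proof.
move=> /limit_pointP [a_ [aX ay acv]].
have /choice [p Hp] : forall n, exists q, X q /\ rR q = a_ n.
  move=> n; have [q Xq qa] := aX (a_ n) (imageT _ n).
  by exists q.
exists p; split.
- by move=> n; case: (Hp n).
- by move=> n; case: (Hp n) => _ ->.
- have -> : (fun n => rR (p n)) = a_ by apply: funext => n; case: (Hp n).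
  exact: acv.
Qed.

Lemma acc_unb X (p : nat -> rat) y :
  (fun n => rR (p n)) @ \oo --> y -> (forall n, rR (p n) != y) ->
  (forall i, exists k, (i <= k)%N /\ X (p k)) -> acc X y.
Proof.
move=> cv py unb; apply: accI => e e0.
have [N _ HN] := (@cvgrPdist_lt _ R^o nat _ _ (fun n => rR (p n)) y).1 cv e e0.
have [k [Nk Xk]] := unb N.
exists (p k); split => //; exact: HN.
Qed.

Lemma rR01 q : QI q -> 0 <= rR q <= 1.
Proof.
rewrite /QI /= => /andP [h0 h1]; apply/andP; split; first by rewrite /rR ler0q.
have : rR q <= rR 1 by rewrite /rR ler_rat.
by rewrite /rR rmorph1.
Qed.

Lemma acc01 X y : X `<=` QI -> acc X y -> 0 <= y <= 1.
Proof.
move=> XQ H; apply/andP; split.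
  rewrite leNgt; apply/negP => y0.
  have e0 : 0 < - y by rewrite oppr_gt0.
  have [a [Xa _ ya]] := accP H e0.
  have /andP [a0 _] := rR01 (XQ a Xa).
  have h : rR a - y <= `|y - rR a| by rewrite distrC ler_norm.
  lra.
rewrite leNgt; apply/negP => y1.
have : 0 < y - 1 by rewrite subr_gt0.
move=> e0; have [a [Xa _ ya]] := accP H e0.
have /andP [_ a1] := rR01 (XQ a Xa).
have h : y - rR a <= `|y - rR a| by rewrite ler_norm.
lra.
Qed.

Definition sep (y : R) (S : set rat) :=
  exists2 e : R, 0 < e & forall a, S a -> rR a != y -> e <= `|y - rR a|.

Lemma sep_nacc y S : sep y S -> ~ acc S y.
Proof.
move=> [e e0 H] /accP /(_ e e0) [a [Sa ay ya]].
by have := H a Sa ay; rewrite leNgt ya.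
Qed.

Lemma sep_sub y S1 S2 : S1 `<=` S2 -> sep y S2 -> sep y S1.
Proof. by move=> S12 [e e0 H]; exists e => // a /S12; apply: H. Qed.

Lemma sep_U y S1 S2 : sep y S1 -> sep y S2 -> sep y (S1 `|` S2).
Proof.
move=> [e1 e10 H1] [e2 e20 H2]; exists (Num.min e1 e2).
  by rewrite lt_min e10 e20.
move=> a [Sa|Sa] ay; rewrite ge_min.
  by rewrite H1.
by rewrite H2 ?orbT.
Qed.

Lemma sep_1 y a : sep y [set a].
Proof.
have [ay|ay] := eqVneq (rR a) y.
  by exists 1 => // b -> ; rewrite ay eqxx.
exists `|y - rR a|; first by rewrite normr_gt0 subr_eq0 eq_sym.
by move=> b -> _.
Qed.

Lemma sep_seq y (l : seq rat) : sep y [set` l].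
Proof.
elim: l => [|a l IH].
  by exists 1 => // b.
apply: (@sep_sub _ _ ([set a] `|` [set` l])); last exact: sep_U (sep_1 y a) IH.
by move=> b /=; rewrite in_cons => /orP [/eqP ->|bl]; [left|right].
Qed.

Lemma sep_fin y F : finite_set F -> sep y F.
Proof. by move=> /finite_seqP [l ->]; exact: sep_seq. Qed.

Lemma sep_range y (s : nat -> rat) z :
  (fun n => rR (s n)) @ \oo --> z -> z != y ->
  sep y [set q | exists n, s n = q].
Proof.
move=> cv zy.
have e0 : 0 < `|z - y| / 2 by rewrite divr_gt0 // normr_gt0 subr_eq0.
have [N _ HN] := (@cvgrPdist_lt _ R^o nat _ _ (fun n => rR (s n)) z).1 cv _ e0.
apply: (@sep_sub _ _ ([set` [seq s i | i <- iota 0 N]] `|`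
   [set q | exists2 n, (N <= n)%N & s n = q])).
  move=> q [n <-]; have [nN|Nn] := ltnP n N.
    by left; rewrite /= map_f // mem_iota.
  by right; exists n.
apply: sep_U; first exact: sep_seq.
exists (`|z - y| / 2) => // a [n Nn <-] _.
have h1 := HN n Nn; rewrite /= in h1.
have h2 := ler_distD (rR (s n)) z y.
rewrite (distrC (rR (s n)) y) in h2.
set d := `|z - y| in h1 h2 e0 *.
lra.
Qed.

Lemma sep_ranges (ss : seq (nat -> rat)) :
  (forall s, s \in ss -> conv_seq s) ->
  exists Z : seq R, forall y, y \notin Z ->
    sep y [set q | exists2 s, s \in ss & exists n, s n = q].
Proof.
elim: ss => [|s ss IH] Hss.
  by exists [::] => y' _; exists 1 => // a [s].
have [Z HZ] : exists Z : seq R, forall y, y \notin Z -> sep y [set q | exists2 s, s \in ss & exists n, s n = q].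
  by apply: IH => s1 h; apply: Hss; rewrite in_cons h orbT.
have [_ [z [_ cz]]] := Hss s (mem_head _ _).
exists (z :: Z) => y'; rewrite in_cons negb_or => /andP [zy yZ].
apply: (@sep_sub _ _ ([set q | exists n, s n = q] `|`
   [set q | exists2 s, s \in ss & exists n, s n = q])).
  move=> q [s' ]; rewrite in_cons => /orP [/eqP ->|s'ss] Hq; first by left.
  by right; exists s'.
apply: sep_U; last exact: HZ.
by apply: sep_range cz _; rewrite eq_sym.
Qed.

Lemma conv_acc X : Defs.conv X -> exists Z : seq R, forall y, acc X y -> y \in Z.
Proof.
move=> [_ [F [ss [finF [Hss cov]]]]].
have [Z HZ] := sep_ranges Hss.
exists Z => y Hy; apply/negPn/negP => yZ.
apply: (sep_nacc _ Hy); apply: sep_sub cov _.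
apply: sep_U; [exact: sep_fin | exact: HZ].
Qed.

Lemma argmin_seq (L : seq R) (t : R) : L != [::] ->
  exists2 y, y \in L & forall y', y' \in L -> `|t - y| <= `|t - y'|.
Proof.
elim: L => [//|y1 L IH] _.
have [->|Ln0] := eqVneq L [::].
  by exists y1; rewrite ?mem_head // => y'; rewrite inE => /eqP ->.
have [y2 y2L H2] := IH Ln0.
have [h|h] := leP `|t - y1| `|t - y2|.
  exists y1; first exact: mem_head.
  move=> y'; rewrite in_cons => /orP [/eqP ->//|y'L].
  exact: le_trans h (H2 _ y'L).
exists y2; first by rewrite in_cons y2L orbT.
move=> y'; rewrite in_cons => /orP [/eqP ->|y'L]; first exact: ltW.
exact: H2.
Qed.

Lemma bounded01 (E : set R^o) : E `<=` [set t | 0 <= t <= 1] -> bounded_set E.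
Proof.
move=> HE; rewrite /bounded_set /= /bounded_near.
apply: filterS (@nbhs_pinfty_ge _ 1 (num_real 1)) => M M1 t /HE /andP [t0 t1].
by rewrite /= ger0_norm //; apply: le_trans t1 _.
Qed.

Lemma rR_inj : injective rR.
Proof. exact: fmorph_inj. Qed.

Lemma infinite_acc X : X `<=` QI -> infinite_set X -> exists z, acc X z.
Proof.
move=> XQ infX.
have infE : infinite_set (rR @` X).
  move=> finE; apply: infX.
  have fp : finite_set (rR @^-1` (rR @` X)).
    exact: (finite_preimage (in2W rR_inj) finE).
  by apply: sub_finite_set fp => a Xa; exists a.
have bE : bounded_set (rR @` X : set R^o).
  by apply: bounded01 => t [a Xa <-]; apply: rR01; apply: XQ.
have [z Hz] := infinite_bounded_limit_point_nonempty infE bE.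
by exists z.
Qed.

Lemma finite_far X (L : seq R) e : X `<=` QI -> 0 < e ->
  (forall y, acc X y -> y \in L) ->
  finite_set [set a | X a /\ forall y, y \in L -> e <= `|rR a - y|].
Proof.
move=> XQ e0 HL; apply: contrapT => infE.
have EX : [set a | X a /\ forall y, y \in L -> e <= `|rR a - y|] `<=` X.
  by move=> a [].
have [z Hz] := infinite_acc (subset_trans EX XQ) infE.
have zL := HL z (acc_mono EX Hz).
have [a [[Xa Ha] _ za]] := accP Hz e0.
by have := Ha z zL; rewrite distrC leNgt za.
Qed.

Lemma not_conv_acc_inf X : X `<=` QI -> ~ Defs.conv X -> infinite_set (acc X).
Proof.
move=> XQ nc /finite_seqP [L HL]; apply: nc.
have HLin : forall y, acc X y -> y \in L.
  by move=> y h; have : [set` L] y by rewrite -HL.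
have HLac : forall y, y \in L -> acc X y.
  by move=> y yL; rewrite HL.
have /choice [w Hw] : forall y : R, exists p : nat -> rat, acc X y ->
   [/\ forall n, X (p n), forall n, rR (p n) != y &
       (fun n => rR (p n)) @ \oo --> y].
  move=> y; have [h|h] := pselect (acc X y); last by exists (fun _ => 0).
  by have [p Hp] := acc_seq h; exists p.
pose s (y : R) (k : nat) : rat :=
  if pickle_inv k is Some a then
    (if `[< X a /\ (forall y', y' \in L -> `|rR a - y| <= `|rR a - y'|) >]
     then a else w y k)
  else w y k.
split => //.
exists [set a | X a /\ forall y, y \in L -> 1 <= `|rR a - y|], (map s L).
split; first exact: finite_far.
split.
  move=> s' /mapP [y yL ->]; have [wX wy wc] := Hw y (HLac y yL).
  split.
    move=> k; rewrite /s; case: (pickle_inv k) => [a|]; last exact: XQ.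
    by case: asboolP => [[Xa _]|_]; apply: XQ.
  exists y; split; first exact: acc01 XQ (HLac y yL).
  apply/(@cvgrPdist_lt _ R^o nat _ _ (fun n => rR (s y n)) y) => e e0.
  have [lE HE] := (finite_seqP _).1 (finite_far XQ e0 HLin).
  have [N1 _ H1] := (@cvgrPdist_lt _ R^o nat _ _ _ y).1 wc e e0.
  pose K := (\max_(a <- lE) pickle a)%N.
  exists (maxn N1 K.+1) => // k /=; rewrite geq_max => /andP [k1 k2].
  rewrite /s; case Hk: (pickle_inv k) => [a|]; last exact: H1.
  case: asboolP => [[Xa Hnear]|_]; last exact: H1.
  rewrite ltNge; apply/negP => ea.
  have alE : a \in lE.
    have : [set a | X a /\ forall y, y \in L -> e <= `|rR a - y|] a.
      split => // y' y'L; rewrite distrC in ea; exact: le_trans ea (Hnear _ y'L).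
    by rewrite HE.
  have pk : pickle a = k by have := @pickle_invK rat k; rewrite Hk.
  have : (pickle a <= K)%N by apply: leq_bigmax_seq.
  by rewrite pk leqNgt k2.
move=> a Xa.
have [h|h] := pselect (forall y, y \in L -> 1 <= `|rR a - y|); first by left.
right.
have Ln0 : L != [::] by apply/eqP => L0; apply: h => y; rewrite L0.
have [y yL Hy] := argmin_seq (rR a) Ln0.
exists (s y); first exact: map_f.
exists (pickle a); rewrite /s pickleK_inv.
by case: asboolP => // [[]]; split.
Qed.

Lemma columns X : X `<=` QI -> ~ Defs.conv X ->
  exists (x : nat -> R) (p : nat -> nat -> rat),
  [/\ injective x, forall j k, X (p j k), forall j k, rR (p j k) != x j &
      forall j, (fun k => rR (p j k)) @ \oo --> x j].
Proof.
move=> XQ nc.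
have /infiniteP /pcard_leP /injfunPex [x xf xi] := not_conv_acc_inf XQ nc.
have xa : forall j, acc X (x j) by move=> j; exact: (xf j Logic.I).
have /choice [p Hp] : forall j, exists p : nat -> rat,
   [/\ forall n, X (p n), forall n, rR (p n) != x j &
       (fun n => rR (p n)) @ \oo --> x j].
  by move=> j; exact: acc_seq (xa j).
exists x, p; split.
- by move=> a b ab; apply: xi => //; exact: in_setT.
- by move=> j k; case: (Hp j).
- by move=> j k; case: (Hp j).
- by move=> j; case: (Hp j).
Qed.

Lemma col_conv X (p : nat -> rat) y : X `<=` QI -> (forall k, X (p k)) ->
  (forall k, rR (p k) != y) -> (fun k => rR (p k)) @ \oo --> y -> conv_seq p.
Proof.
move=> XQ pX py cv; split; first by move=> k; apply: XQ.
exists y; split => //; apply: (acc01 XQ); apply: acc_unb cv py _.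
by move=> i; exists i.
Qed.

Lemma inj_bound {T : eqType} (f : nat -> T) (L : seq T) : injective f ->
  exists b, forall j, f j \in L -> (j <= b)%N.
Proof.
move=> fi; elim: L => [|z L [b Hb]]; first by exists 0%N.
have [[j0 fj0]|nj] := pselect (exists j0, f j0 = z).
  exists (maxn j0 b) => j; rewrite in_cons => /orP [/eqP|] h.
    by rewrite -fj0 in h; rewrite (fi _ _ h) leq_maxl.
  by apply: leq_trans (Hb _ h) (leq_maxr _ _).
exists b => j; rewrite in_cons => /orP [/eqP h|h]; last exact: Hb.
by exfalso; apply: nj; exists j.
Qed.

Lemma S_bounded (Y : set rat) (x : nat -> R) (p : nat -> nat -> rat) :
  Defs.conv Y -> injective x -> (forall j k, rR (p j k) != x j) ->
  (forall j, (fun k => rR (p j k)) @ \oo --> x j) ->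
  exists b, forall j, (forall i, exists k, (i <= k)%N /\ Y (p j k)) -> (j <= b)%N.
Proof.
move=> cY xi px cv.
have [Z HZ] := conv_acc cY.
have [b Hb] := inj_bound Z xi.
exists b => j unb; apply: Hb; apply: HZ.
exact: acc_unb (cv j) (px j) unb.
Qed.

Lemma le_bigmax2 (F : nat -> nat -> nat) m n j : (n <= m)%N -> (j <= m)%N ->
  (F n j <= \max_(n' < m.+1) \max_(j' < m.+1) F n' j')%N.
Proof.
move=> hn0 hj0.
have hn : (n < m.+1)%N by rewrite ltnS.
have hj : (j < m.+1)%N by rewrite ltnS.
rewrite (bigD1 (Ordinal hn)) //= (bigD1 (Ordinal hj)) //=.
by rewrite !leq_max leqnn.
Qed.

Theorem mainTheorem3 :
  forall Af : set (set rat),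
    conv_MAD Af -> ~ countable Af ->
    exists F : set (nat -> nat), unbounded F /\ (F #<= Af)%card.
Proof.
move=> Af [Hpos [Had Hmax]] Hunc.
have infAf : infinite_set Af.
  by move=> fin; apply: Hunc; exact: finite_set_countable.
have /infiniteP /pcard_leP /injfunPex [A_ A_f A_i] := infAf.
have A_Af : forall n, Af (A_ n) by move=> n; exact: (A_f n Logic.I).
have A_inj : injective A_.
  by move=> a b ab; apply: A_i => //; exact: in_setT.
have /choice [xp Hxp] : forall n, exists xp : (nat -> R) * (nat -> nat -> rat),
   [/\ injective xp.1, forall j k, A_ n (xp.2 j k),
       forall j k, rR (xp.2 j k) != xp.1 j &
       forall j, (fun k => rR (xp.2 j k)) @ \oo --> xp.1 j].
  move=> n; have [AQ nc] := Hpos _ (A_Af n).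
  by have [x [p H]] := columns AQ nc; exists (x, p).
pose x n := (xp n).1.
pose p n := (xp n).2.
have xi : forall n, injective (x n) by move=> n; case: (Hxp n).
have pA : forall n j k, A_ n (p n j k) by move=> n; case: (Hxp n).
have px : forall n j k, rR (p n j k) != x n j by move=> n; case: (Hxp n).
have pc : forall n j, (fun k => rR (p n j k)) @ \oo --> x n j.
  by move=> n; case: (Hxp n).
have pQ : forall n j k, QI (p n j k).
  by move=> n j k; have [AQ _] := Hpos _ (A_Af n); exact: AQ.
have pconv : forall n j, conv_seq (p n j).
  move=> n j; have [AQ _] := Hpos _ (A_Af n).
  exact: col_conv AQ (pA n j) (px n j) (pc n j).
pose Sp (A : set rat) n b := forall j,
  (forall i, exists k, (i <= k)%N /\ A (p n j k)) -> (j <= b)%N.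
pose Tp (A : set rat) n j b := forall k, A (p n j k) -> (k <= b)%N.
have /choice [phi Hphi] : forall An : set rat * nat, exists b,
    (exists b', Sp An.1 An.2 b') -> Sp An.1 An.2 b.
  move=> [A n]; have [[b' h]|h] := pselect (exists b', Sp A n b').
    by exists b'.
  by exists 0%N.
have /choice [psi Hpsi] : forall Anj : set rat * nat * nat, exists b,
    (exists b', Tp Anj.1.1 Anj.1.2 Anj.2 b') -> Tp Anj.1.1 Anj.1.2 Anj.2 b.
  move=> [[A n] j]; have [[b' h]|h] := pselect (exists b', Tp A n j b').
    by exists b'.
  by exists 0%N.
pose Phi (A : set rat) (m : nat) := maxn (phi (A, m))
  (\max_(n < m.+1) \max_(j < m.+1) psi (A, nat_of_ord n, nat_of_ord j))%N.
exists (Phi @` Af); split; last exact: card_image_le.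
move=> [g Hg].
pose B := [set q | exists n j k, [/\ (g n < j)%N, (j <= g n + n)%N,
   (g (maxn n j) < k)%N & q = p n j k]].
have BQ : B `<=` QI by move=> q [n [j [k [_ _ _ ->]]]].
have Bnc : ~ Defs.conv B.
  move=> cB; have [Z HZ] := conv_acc cB.
  pose n := (size Z).+1.
  have sub : {subset map (x n) (iota (g n).+1 n) <= Z}.
    move=> t /mapP [j]; rewrite mem_iota => /andP [j1 j2] ->.
    apply: HZ; apply: acc_unb (pc n j) (px n j) _ => i.
    exists (maxn i (g (maxn n j)).+1); split; first exact: leq_maxl.
    exists n, j, (maxn i (g (maxn n j)).+1); split.
    - exact: j1.
    - by move: j2; rewrite addSn ltnS.
    - by rewrite leq_max ltnSn orbT.
    - by [].
  have := uniq_leq_size _ sub.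
  rewrite map_inj_uniq ?iota_uniq // => /(_ isT).
  by rewrite size_map size_iota ltnn.
have inter : forall A, Af A -> Defs.conv (A `&` B).
  move=> A AfA.
  have [N HN] := Hg (Phi A) (imageP _ AfA).
  have [N' HN'] : exists N', forall n, (N' <= n)%N -> A <> A_ n.
    have [[n0 e]|ne] := pselect (exists n0, A = A_ n0).
      exists n0.+1 => n n0n e'; rewrite e in e'.
      by have h := A_inj _ _ e'; rewrite h ltnn in n0n.
    by exists 0%N => n _ e; apply: ne; exists n.
  pose M := maxn N N'.
  have key : forall n j k, (g n < j)%N -> (g (maxn n j) < k)%N ->
      A (p n j k) -> (n < M)%N.
    move=> n j k gj gk Ak; rewrite ltnNge; apply/negP => Mn.
    have Nn : (N <= n)%N by apply: leq_trans Mn; exact: leq_maxl.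
    have N'n : (N' <= n)%N by apply: leq_trans Mn; exact: leq_maxr.
    have cI : Defs.conv (A `&` A_ n) := Had _ _ AfA (A_Af n) (HN' n N'n).
    have [b Hb] := S_bounded cI (xi n) (px n) (pc n).
    have Sb : Sp A n (phi (A, n)).
      apply: (Hphi (A, n)); exists b => j' unb; apply: Hb => i.
      have [k' [ik' Ak']] := unb i; exists k'; split => //; split => //.
    have phig : (phi (A, n) <= g n)%N := leq_trans (leq_maxl _ _) (HN n Nn).
    have nunb : ~ (forall i, exists k, (i <= k)%N /\ A (p n j k)).
      move=> unb; have := Sb j unb; rewrite leqNgt => /negP; apply.
      exact: leq_ltn_trans phig gj.
    have [i Hi] : exists i, forall k, (i <= k)%N -> ~ A (p n j k).
      apply: contrapT => h; apply: nunb => i; apply: contrapT => h2.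
      by apply: h; exists i => k' ik' Ak'; apply: h2; exists k'.
    have Tb : Tp A n j (psi (A, n, j)).
      apply: (Hpsi (A, n, j)); exists i => k' Ak'; rewrite leqNgt.
      by apply/negP => ik'; exact: Hi k' (ltnW ik') Ak'.
    have kpsi : (k <= psi (A, n, j))%N := Tb k Ak.
    have psig : (psi (A, n, j) <= g (maxn n j))%N.
      apply: leq_trans (HN _ (leq_trans Nn (leq_maxl _ _))).
      apply: leq_trans (leq_maxr _ _).
      exact: (le_bigmax2 (fun n j => psi (A, n, j)) (leq_maxl _ _) (leq_maxr _ _)).
    by have := leq_ltn_trans (leq_trans kpsi psig) gk; rewrite ltnn.
  split; first by move=> q [_ /BQ].
  exists set0, [seq p n j | n <- iota 0 M, j <- iota 0 (g n + n).+1].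
  split; first exact: finite_set0.
  split.
    by move=> s /allpairsPdep [n [j [_ _ ->]]]; exact: pconv.
  move=> q [Aq [n [j [k [gj jn gk qe]]]]]; right.
  exists (p n j); last by exists k.
  apply/allpairsPdep; exists n, j; split => //.
    rewrite mem_iota add0n; rewrite qe in Aq; exact: key gj gk Aq.
  by rewrite mem_iota add0n ltnS.
have Bpos : conv_pos B by split.
have [AfB|nAfB] := pselect (Af B).
  by apply: Bnc; rewrite -(setIid B); exact: inter.
have [A AfA nc] := Hmax B Bpos nAfB.
exact: nc (inter A AfA).
Qed.
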